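(* Let $\ell\in\mathbb{N}$ and $\alpha_j,\beta_j\in\mathbb{N}$ (positive integers) for $j=1,\dots,\ell$. Then, as formal power series in $t$ and $q$, $$\mathbf{R}^{\alpha_1}\Big[\mathbf{y}^{\beta_1}\mathbf{R}^{\alpha_2}\big[\mathbf{y}^{\beta_2}\cdots\mathbf{R}^{\alpha_\ell}[\mathbf{y}^{\beta_\ell}]\cdots\big]\Big](t)=\sum_{\substack{j_1\ge\beta_1,\dots,j_\ell\ge\beta_\ell\\ k_1\ge\alpha_1,\dots,k_\ell\ge\alpha_\ell}}\prod_{r=1}^\ell\left[\binom{j_r-1}{\beta_r-1}\binom{k_r-1}{\alpha_r-1}q^{k_r\sum_{s=r}^\ell j_s}t^{j_r}\right].$$
   Context: $\mathbf{y}(t)=\frac{t}{1-t}$, and $\mathbf{y}^{\beta}$ denotes multiplication by the series $\mathbf{y}(t)^\beta$. $\mathbf{R}$ is the operator on formal power series $f(t)$ (with coefficients in $\mathbb{Q}[[q]]$ and no constant term in $t$) given by $\mathbf{R}[f](t)=\sum_{k\ge1}f(q^kt)$, and $\mathbf{R}^{n}$ is its $n$-fold composition. *)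

(* Defs.v *)
From HB Require Import structures.
From mathcomp Require Import all_boot all_order all_algebra.
Set Implicit Arguments. Unset Strict Implicit. Unset Printing Implicit Defensive.
Import Order.TTheory GRing.Theory Num.Theory.
Local Open Scope ring_scope.

(* A formal power series in Q[[t,q]]:  f a b = coefficient of t^a q^b. *)
Definition fps := nat -> nat -> rat.

Definition fps_one : fps := fun a b => if (a == 0)%N && (b == 0)%N then 1 else 0.

Definition fps_mul (f g : fps) : fps :=
  fun a b => \sum_(i < a.+1) \sum_(c < b.+1) f i c * g (a - i)%N (b - c)%N.

(* y(t) = t/(1-t) = sum_{j>=1} t^j *)
Definition fps_y : fps := fun a b => if (0 < a)%N && (b == 0)%N then 1 else 0.

Definition fps_ypow (n : nat) : fps := iter n (fps_mul fps_y) fps_one.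

(* R[f](t) = sum_{k>=1} f(q^k t).  The coefficient of t^a q^b in f(q^k t) is
   f a (b - k a) when k a <= b.  R is only defined on series without constant
   term in t; we set the t^0 component of R[f] to 0 (which is correct on that
   domain). *)
Definition opR (f : fps) : fps :=
  fun a b => if a == 0%N then 0
             else \sum_(1 <= k < b.+1 | (k * a <= b)%N) f a (b - k * a)%N.

Definition opRn (n : nat) (f : fps) : fps := iter n opR f.

Definition nested (l : nat) (al be : 'I_l -> nat) : fps :=
  foldr (fun i acc => opRn (al i) (fps_mul (fps_ypow (be i)) acc))
        fps_one (enum 'I_l).

(* Coefficient of t^a q^b of the right-hand side: the sum over all
   j_r >= be_r, k_r >= al_r of the product; only tuples with
   sum_r j_r = a and sum_r k_r (sum_{s>=r} j_s) = b contribute to this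
   coefficient, and such tuples satisfy j_r <= a, k_r <= b (as all j_s >= 1),
   so the sum is a finite sum over bounded tuples. *)
Definition rhs (l : nat) (al be : 'I_l -> nat) : fps :=
  fun a b =>
    \sum_(j : {ffun 'I_l -> 'I_a.+1})
     \sum_(k : {ffun 'I_l -> 'I_b.+1} |
             [forall r, (be r <= j r)%N && (al r <= k r)%N]
             && ((\sum_(r < l) (j r : nat))%N == a)
             && ((\sum_(r < l) (k r : nat) * (\sum_(s < l | (r <= s)%N) (j s : nat)))%N == b))
       \prod_(r < l) (('C(j r - 1, be r - 1) * 'C(k r - 1, al r - 1))%N)%:R.

(* Main.v *)
Require Import Defs.
From mathcomp Require Import all_boot all_order all_algebra.
From mathcomp Require Import zify ring lra.
Set Implicit Arguments. Unset Strict Implicit. Unset Printing Implicit Defensive.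
Import Order.TTheory GRing.Theory Num.Theory.
Local Open Scope ring_scope.

Lemma hockey (al K : nat) : (0 < al)%N ->
  (\sum_(m < K | (al <= m)%N) 'C(m.-1, al.-1))%N = 'C(K.-1, al).
Proof.
case: al => // al _; elim: K => [|K IH]; first by rewrite big_ord0.
rewrite big_mkcond big_ord_recr /= -big_mkcond IH; case: K IH => [|K] IH.
  by rewrite /= bin0n.
rewrite /= binS; case: ifP => H //.
by rewrite (@bin_small K al) ?addn0 //; lia.
Qed.


Lemma mul_one (f : fps) a b : fps_mul f fps_one a b = f a b.
Proof.
rewrite /fps_mul big_ord_recr /= big1 ?add0r; last first.
  move=> i _; rewrite big1 // => c _; rewrite /fps_one.
  have -> : (a - i == 0)%N = false by case: i => /= i; lia.
  by rewrite mulr0.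
rewrite big_ord_recr /= big1 ?add0r; last first.
  move=> c _; rewrite /fps_one subnn /=.
  have -> : (b - c == 0)%N = false by case: c => /= c; lia.
  by rewrite mulr0.
by rewrite !subnn /fps_one /= mulr1.
Qed.

Lemma hockey_rev (be j : nat) :
  (\sum_(i < j.+1 | (0 < i)%N && (be.+1 <= j - i)%N) 'C((j - i).-1, be))%N
  = 'C(j.-1, be.+1).
Proof.
rewrite -hockey // (reindex_inj rev_ord_inj) /= big_mkcond big_ord_recr /= subnn ltnn andFb addn0.
rewrite [RHS]big_mkcond; apply: eq_bigr => i _.
have Hi := ltn_ord i.
have -> : (j.+1 - i.+1 = j - i)%N by lia.
have -> : (j - (j - i) = i)%N by lia.
by have -> : (0 < j - i)%N by lia.
Qed.

Lemma ypowE (be j c : nat) : (0 < be)%N ->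
  fps_ypow be j c = if (c == 0)%N && (be <= j)%N then ('C(j.-1, be.-1))%:R else 0.
Proof.
elim: be j c => // be IH j c _.
have E : forall n, fps_ypow n.+1 = fps_mul fps_y (fps_ypow n) by [].
rewrite E.
case: be IH => [|be] IH.
  rewrite /= mul_one /fps_y bin0 andbC; by case: j.
rewrite /fps_mul.
under eq_bigr => i _.
  rewrite big_ord_recl /= big1; last by move=> c' _; rewrite /fps_y andbF mul0r.
  rewrite addr0 subn0 -E IH //.
  over.
case: (eqVneq c 0%N) => [Ec|cn0] /=; last first.
  by rewrite big1 // => i _; rewrite mulr0.
subst c; rewrite -[RHS]/(if (be.+2 <= j)%N then _ else _).
have -> : (if (be.+2 <= j)%N then ('C(j.-1, be.+1))%:R else 0 :> rat)
   = ('C(j.-1, be.+1))%:R.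
  by case: ifP => // H; rewrite bin_small //; lia.
rewrite -hockey_rev natr_sum [RHS]big_mkcond /=; apply: eq_bigr => i _.
by rewrite /fps_y; case: (0 < i)%N; case: ifP; rewrite ?mul1r ?mul0r.
Qed.

Lemma sum_trunc (F : nat -> rat) n m : (n <= m)%N ->
  (forall k, (n <= k)%N -> (k < m)%N -> F k = 0) ->
  \sum_(k < m) F k = \sum_(k < n) F k.
Proof.
move=> Hnm HF; rewrite -(subnKC Hnm) big_split_ord /= [X in _ + X]big1 ?addr0 // => i _.
apply: HF; rewrite ?leq_addr //; have := ltn_ord i; lia.
Qed.

Lemma sum_shift (H : nat -> rat) m n :
  (forall K, (K < m)%N -> H K = 0) -> (forall K, (n < K)%N -> H K = 0) ->
  \sum_(k < n.+1) H (k + m)%N = \sum_(K < n.+1) H K.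
Proof.
move=> H1 H2.
rewrite -(@sum_trunc H n.+1 (m + n.+1)) ?leq_addl //; last by move=> k Hk _; apply: H2.
rewrite big_split_ord /= [X in _ = X + _]big1 ?add0r; last by move=> i _; apply: H1.
by apply: eq_bigr => i _; rewrite addnC.
Qed.

Lemma opR_E (f : fps) a b : (0 < a)%N ->
  opR f a b = \sum_(k < b.+1) (if (0 < k)%N && (k * a <= b)%N then f a (b - k * a)%N else 0).
Proof.
move=> a0; rewrite /opR; have -> : (a == 0%N) = false by lia.
rewrite -(big_mkord xpredT (fun k => if (0 < k)%N && (k * a <= b)%N then f a (b - k * a)%N else 0)).
rewrite big_ltn //= add0r big_mkcond /=.
by apply: eq_big_nat => k Hk; have -> : (0 < k)%N by lia.
Qed.

Definition Hf (f : fps) a b m K : rat :=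
  if (m < K)%N && (K * a <= b)%N then f a (b - K * a)%N else 0.

Lemma opRnE (f : fps) al a b : (0 < al)%N -> (0 < a)%N ->
  opRn al f a b = \sum_(K < b.+1) (if (al <= K)%N && (K * a <= b)%N
     then ('C(K.-1, al.-1))%:R * f a (b - K * a)%N else 0).
Proof.
move=> + a0; elim: al b => // al IH b _.
case: al IH => [|al] IH.
  rewrite /opRn /= opR_E //; apply: eq_bigr => k _.
  by rewrite bin0 mul1r.
have -> : opRn al.+2 f = opR (opRn al.+1 f) by [].
rewrite opR_E //.
pose S := \sum_(m < b.+1) (if (al.+1 <= m)%N then
   ('C(m.-1, al))%:R * \sum_(K < b.+1) Hf f a b m K else 0).
transitivity S.
  transitivity (\sum_(k < b.+1) \sum_(m < b.+1)
     (if (al.+1 <= m)%N then ('C(m.-1, al))%:R * Hf f a b m (k + m) else 0)).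
    apply: eq_bigr => k _.
    case: ifP => Hk; last first.
      rewrite big1 // => m _; case: ifP => // _; rewrite /Hf.
      case: ifP; rewrite ?mulr0 // => H2.
      move: Hk; have -> : (0 < k)%N by lia.
      by rewrite mulnDl; lia.
    rewrite IH // (@sum_trunc (fun m => if (al.+1 <= m)%N then ('C(m.-1, al))%:R * Hf f a b m (k + m) else 0) (b - k * a).+1 b.+1); first last.
    - move=> m Hm _; case: ifP => // _; rewrite /Hf; case: ifP; rewrite ?mulr0 //.
      rewrite mulnDl; nia.
    - lia.
    apply: eq_bigr => m _; rewrite /Hf.
    have -> : (m < k + m)%N by lia.
    have -> : ((k + m) * a <= b)%N = (m * a <= b - k * a)%N by rewrite mulnDl; lia.
    have -> : (b - (k + m) * a = b - k * a - m * a)%N by rewrite mulnDl; lia.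
    by case: (al.+1 <= m)%N => //=; case: ifP; rewrite ?mulr0.
  rewrite exchange_big; apply: eq_bigr => m _.
  case: ifP => Hm; last by rewrite big1.
  rewrite -mulr_sumr; congr (_ * _).
  apply: (@sum_shift (Hf f a b m)).
  - by move=> K HK; rewrite /Hf; have -> : (m < K)%N = false by lia.
  - by move=> K HK; rewrite /Hf (_ : (K * a <= b)%N = false) ?andbF //; nia.
rewrite /S (eq_bigr (fun m : 'I_b.+1 => \sum_(K < b.+1)
   (if (al.+1 <= m)%N then ('C(m.-1, al))%:R * Hf f a b m K else 0))); last first.
  move=> m _; case: ifP => _; last by rewrite big1.
  by rewrite mulr_sumr.
rewrite exchange_big; apply: eq_bigr => K _.
case: ifP => HK; last first.
  rewrite big1 // => m _; case: ifP => // Hm; rewrite /Hf.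
  case: ifP; rewrite ?mulr0 // => H2; move: HK; lia.
move/andP: HK => [HK1 HK2].
rewrite [_.+1.-1]/= -hockey // natr_sum mulr_suml.
rewrite (@sum_trunc (fun m => if (al.+1 <= m)%N then ('C(m.-1, al))%:R * Hf f a b m K else 0) K b.+1); last first.
- by move=> m Hm _; case: ifP => // _; rewrite /Hf (_ : (m < K)%N = false) ?mulr0 //; lia.
- exact: ltnW.
rewrite [RHS]big_mkcond /=; apply: eq_bigr => m _.
rewrite /Hf (ltn_ord m) HK2 /=.
by case: ifP; rewrite ?mul0r.
Qed.

Lemma mulyE be (F : fps) a b : (0 < be)%N ->
  fps_mul (fps_ypow be) F a b =
  \sum_(i < a.+1) (if (be <= i)%N then ('C(i.-1, be.-1))%:R * F (a - i)%N b else 0).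
Proof.
move=> be0; rewrite /fps_mul; apply: eq_bigr => i _.
rewrite big_ord_recl /= big1 ?addr0; last first.
  by move=> c _; rewrite ypowE //= mul0r.
rewrite ypowE //= subn0; by case: ifP; rewrite ?mul0r.
Qed.

Lemma opRn_a0 (f : fps) al b : (0 < al)%N -> opRn al f 0 b = 0.
Proof. by case: al. Qed.

Lemma nestedS l (al be : 'I_l.+1 -> nat) :
  nested al be = opRn (al ord0) (fps_mul (fps_ypow (be ord0))
     (nested (fun i => al (lift ord0 i)) (fun i => be (lift ord0 i)))).
Proof. by rewrite /nested enum_ordSl /= foldr_map. Qed.

Definition cnd l (al be : 'I_l -> nat) N M (j : {ffun 'I_l -> 'I_N.+1})
   (k : {ffun 'I_l -> 'I_M.+1}) a b : bool :=
  [forall r, (be r <= j r)%N && (al r <= k r)%N]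
             && ((\sum_(r < l) (j r : nat))%N == a)
             && ((\sum_(r < l) (k r : nat) * (\sum_(s < l | (r <= s)%N) (j s : nat)))%N == b).

Definition prd l (al be : 'I_l -> nat) N M (j : {ffun 'I_l -> 'I_N.+1})
   (k : {ffun 'I_l -> 'I_M.+1}) : rat :=
  \prod_(r < l) (('C(j r - 1, be r - 1) * 'C(k r - 1, al r - 1))%N)%:R.

Definition rhsN l (al be : 'I_l -> nat) N M a b : rat :=
  \sum_(j : {ffun 'I_l -> 'I_N.+1})
     \sum_(k : {ffun 'I_l -> 'I_M.+1} | cnd al be j k a b) prd al be j k.

Lemma rhs_rhsN l (al be : 'I_l -> nat) a b : rhs al be a b = rhsN al be a b a b.
Proof. by []. Qed.

Definition fcons (T : Type) l (x : T) (g : {ffun 'I_l -> T}) : {ffun 'I_l.+1 -> T} :=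
  [ffun i => if unlift ord0 i is Some i' then g i' else x].

Lemma fcons0 (T : Type) l (x : T) g : @fcons T l x g ord0 = x.
Proof. by rewrite ffunE unlift_none. Qed.

Lemma fconsS (T : Type) l (x : T) g i : @fcons T l x g (lift ord0 i) = g i.
Proof. by rewrite ffunE liftK. Qed.

Lemma sum_ffunS (T : finType) l (F : {ffun 'I_l.+1 -> T} -> rat) :
  \sum_f F f = \sum_(x : T) \sum_(g : {ffun 'I_l -> T}) F (fcons x g).
Proof.
rewrite pair_big /= [LHS](reindex (fun p : T * {ffun 'I_l -> T} => fcons p.1 p.2)) //=.
exists (fun f => (f ord0, [ffun i => f (lift ord0 i)])) => [[x g] _|f _] /=.
  rewrite fcons0; congr pair; apply/ffunP => i; by rewrite ffunE fconsS.
apply/ffunP => i; case: (unliftP ord0 i) => [j ->|->].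
  by rewrite fconsS ffunE.
by rewrite fcons0.
Qed.

Lemma forall_ordS l (P : pred 'I_l.+1) :
  [forall r, P r] = P ord0 && [forall r : 'I_l, P (lift ord0 r)].
Proof.
apply/forallP/andP => [H|[H0 /forallP H] r]; first by split => //; apply/forallP.
by case: (unliftP ord0 r) => [j ->|->].
Qed.

Section Split.
Variables (l : nat) (al be : 'I_l.+1 -> nat) (N M : nat).
Let al' := fun i : 'I_l => al (lift ord0 i).
Let be' := fun i : 'I_l => be (lift ord0 i).

Lemma sumJS (j0 : 'I_N.+1) (jt : {ffun 'I_l -> 'I_N.+1}) :
  (\sum_(r < l.+1) (fcons j0 jt r : nat))%N = (j0 + \sum_(r < l) (jt r : nat))%N.
Proof.
rewrite big_ord_recl fcons0; congr addn; apply: eq_bigr => i _; by rewrite fconsS.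
Qed.

Lemma sumKS (j0 : 'I_N.+1) (jt : {ffun 'I_l -> 'I_N.+1})
   (k0 : 'I_M.+1) (kt : {ffun 'I_l -> 'I_M.+1}) :
  (\sum_(r < l.+1) (fcons k0 kt r : nat) * (\sum_(s < l.+1 | (r <= s)%N) (fcons j0 jt s : nat)))%N
  = (k0 * (j0 + \sum_(r < l) (jt r : nat)) +
     \sum_(r < l) (kt r : nat) * (\sum_(s < l | (r <= s)%N) (jt s : nat)))%N.
Proof.
rewrite big_ord_recl fcons0 -sumJS; congr (_ * _ + _)%N.
apply: eq_bigr => r _; rewrite fconsS; congr (_ * _)%N.
rewrite big_mkcond big_ord_recl /= [in RHS]big_mkcond; apply: eq_bigr => s _.
by rewrite fconsS.
Qed.

Lemma condS (j0 : 'I_N.+1) (jt : {ffun 'I_l -> 'I_N.+1})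
   (k0 : 'I_M.+1) (kt : {ffun 'I_l -> 'I_M.+1}) a b :
  cnd al be (fcons j0 jt) (fcons k0 kt) a b =
  [&& (be ord0 <= j0)%N, (al ord0 <= k0)%N, (j0 <= a)%N, (k0 * a <= b)%N &
      cnd al' be' jt kt (a - j0)%N (b - k0 * a)%N].
Proof.
rewrite /cnd sumJS sumKS forall_ordS !fcons0.
have -> : [forall r, (be (lift ord0 r) <= fcons j0 jt (lift ord0 r))%N &&
     (al (lift ord0 r) <= fcons k0 kt (lift ord0 r))%N] =
   [forall r, (be' r <= jt r)%N && (al' r <= kt r)%N].
  by apply: eq_forallb => r; rewrite !fconsS.
set X := [forall _, _]; set A := (\sum_(r < l) _)%N; set B := (\sum_(r < l) _)%N.
case: X; case: (be ord0 <= j0)%N; case: (al ord0 <= k0)%N; rewrite /= ?andbF //.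
apply/idP/idP => [/andP[/eqP E1 /eqP E2]|/and4P[H1 H2 /eqP E1 /eqP E2]].
  subst a b; apply/and4P; split; try lia; apply/eqP; lia.
apply/andP; split; apply/eqP; [lia|].
rewrite E1 subnKC //. lia.
Qed.

Lemma prdS j0 jt k0 kt :
  prd al be (fcons j0 jt) (fcons k0 kt) =
  (('C(j0 - 1, be ord0 - 1) * 'C(k0 - 1, al ord0 - 1))%N)%:R * @prd l al' be' N M jt kt.
Proof.
rewrite /prd big_ord_recl !fcons0; congr (_ * _); apply: eq_bigr => i _.
by rewrite !fconsS.
Qed.

Lemma rhsN_S a b : rhsN al be N M a b =
  \sum_(j0 : 'I_N.+1) \sum_(k0 : 'I_M.+1)
   (if [&& (be ord0 <= j0)%N, (al ord0 <= k0)%N, (j0 <= a)%N & (k0 * a <= b)%N]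
    then (('C(j0 - 1, be ord0 - 1) * 'C(k0 - 1, al ord0 - 1))%N)%:R
         * rhsN al' be' N M (a - j0)%N (b - k0 * a)%N
    else 0).
Proof.
rewrite /rhsN sum_ffunS; apply: eq_bigr => j0 _.
under eq_bigr => jt _ do rewrite big_mkcond sum_ffunS.
rewrite exchange_big; apply: eq_bigr => k0 _.
case: ifP => H0.
  rewrite mulr_sumr; apply: eq_bigr => jt _; rewrite mulr_sumr [RHS]big_mkcond /=.
  apply: eq_bigr => kt _; rewrite condS prdS.
  move: H0; rewrite !andbA => -> /=.
  by case: ifP; rewrite ?mulr0.
rewrite big1 // => jt _; rewrite big1 // => kt _; rewrite condS.
by move: H0; rewrite !andbA => ->.
Qed.
End Split.

Lemma opRnE' (f : fps) al a b M : (0 < al)%N -> (0 < a)%N -> (b <= M)%N ->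
  opRn al f a b = \sum_(K < M.+1) (if (al <= K)%N && (K * a <= b)%N
     then ('C(K.-1, al.-1))%:R * f a (b - K * a)%N else 0).
Proof.
move=> H1 H2 H3; rewrite opRnE //.
rewrite (@sum_trunc (fun K => if (al <= K)%N && (K * a <= b)%N
     then ('C(K.-1, al.-1))%:R * f a (b - K * a)%N else 0) b.+1 M.+1) //.
by move=> k Hk _; rewrite (_ : (k * a <= b)%N = false) ?andbF //; nia.
Qed.

Lemma mulyE' be (F : fps) a b N : (0 < be)%N -> (a <= N)%N ->
  fps_mul (fps_ypow be) F a b =
  \sum_(i < N.+1) (if (be <= i)%N && (i <= a)%N then ('C(i.-1, be.-1))%:R * F (a - i)%N b else 0).
Proof.
move=> H1 H2; rewrite mulyE //.
rewrite (@sum_trunc (fun i => if (be <= i)%N && (i <= a)%N then ('C(i.-1, be.-1))%:R * F (a - i)%N b else 0) a.+1 N.+1) //; last first.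
  by move=> k Hk _; rewrite (_ : (k <= a)%N = false) ?andbF //; lia.
apply: eq_bigr => i _; by rewrite (_ : (i <= a)%N = true) ?andbT //; have := ltn_ord i; lia.
Qed.

Lemma main_gen l : forall (al be : 'I_l -> nat),
  (forall r, (0 < al r)%N) -> (forall r, (0 < be r)%N) ->
  forall N M a b, (a <= N)%N -> (b <= M)%N -> nested al be a b = rhsN al be N M a b.
Proof.
elim: l => [|l IH] al be Hal Hbe N M a b HaN HbM.
  have -> : nested al be = fps_one.
    by rewrite /nested (_ : enum 'I_0 = [::]) //; apply: size0nil; rewrite size_enum_ord.
  rewrite /rhsN.
  have E : forall (j : {ffun 'I_0 -> 'I_N.+1}),
      \sum_(k : {ffun 'I_0 -> 'I_M.+1} | cnd al be j k a b) prd al be j k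
      = fps_one a b.
    move=> j; rewrite big_mkcond /=.
    under eq_bigr => k _.
      rewrite /cnd /prd !big_ord0.
      have -> : [forall r : 'I_0, (be r <= j r)%N && (al r <= k r)%N] by apply/forallP => -[].
      over.
    by rewrite sumr_const card_ffun !card_ord expn0 mulr1n /fps_one (eq_sym 0%N a) (eq_sym 0%N b).
  by rewrite (eq_bigr _ (fun j _ => E j)) sumr_const card_ffun !card_ord expn0 mulr1n.
rewrite nestedS rhsN_S.
set al' := fun i : 'I_l => al (lift ord0 i).
set be' := fun i : 'I_l => be (lift ord0 i).
have Hal' : forall r, (0 < al' r)%N by move=> r; apply: Hal.
have Hbe' : forall r, (0 < be' r)%N by move=> r; apply: Hbe.
have Ha0 := Hal ord0; have Hb0 := Hbe ord0.
case: (posnP a) => [->|apos].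
  rewrite opRn_a0 // big1 // => j0 _; rewrite big1 // => k0 _.
  by rewrite (_ : (be ord0 <= j0)%N && _ = false) //; apply/negbTE; apply/negP => /andP[H1 /andP[_ /andP[H2 _]]]; lia.
have E1 : forall (j0 : 'I_N.+1) (k0 : 'I_M.+1),
   (if [&& (be ord0 <= j0)%N, (al ord0 <= k0)%N, (j0 <= a)%N & (k0 * a <= b)%N]
    then (('C(j0 - 1, be ord0 - 1) * 'C(k0 - 1, al ord0 - 1))%N)%:R
         * rhsN al' be' N M (a - j0)%N (b - k0 * a)%N
    else 0) =
   (if [&& (be ord0 <= j0)%N, (al ord0 <= k0)%N, (j0 <= a)%N & (k0 * a <= b)%N]
    then (('C(j0 - 1, be ord0 - 1) * 'C(k0 - 1, al ord0 - 1))%N)%:R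
         * nested al' be' (a - j0)%N (b - k0 * a)%N
    else 0).
  by move=> j0 k0; case: ifP => // _; rewrite (IH al' be' Hal' Hbe' N M) //; lia.
rewrite (eq_bigr _ (fun j0 _ => eq_bigr _ (fun k0 _ => E1 j0 k0))) exchange_big /=.
rewrite (@opRnE' _ _ _ _ M) //; apply: eq_bigr => k0 _.
case: ifP => Hk.
  rewrite (@mulyE' _ _ _ _ N) // mulr_sumr; apply: eq_bigr => j0 _.
  move/andP: Hk => [Hk1 Hk2]; rewrite Hk1 Hk2 !subn1 /=.
  case: ifP => Hj; last by rewrite mulr0 andbT Hj.
  move/andP: Hj => [Hj1 Hj2]; rewrite Hj1 Hj2 /= natrM.
  by rewrite mulrA [X in X * _]mulrC.
rewrite [RHS]big1 // => j0 _; move: Hk; case: (al ord0 <= k0)%N; case: (k0 * a <= b)%N => //= _; rewrite ?andbF ?andbT ?andFb //.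
Qed.

Theorem theorem3p3 (l : nat) (al be : 'I_l -> nat) :
  (forall r, (0 < al r)%N) -> (forall r, (0 < be r)%N) ->
  forall a b : nat, nested al be a b = rhs al be a b.
Proof.
by move=> Hal Hbe a b; rewrite rhs_rhsN (main_gen Hal Hbe (N := a) (M := b)).
Qed.
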